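(* Let $A$ be a C*-algebra, $K$ an arbitrary set, and $\tau_g:A\to A$ a $*$-homomorphism for each $g\in K$. Assume that $A$ is generated (as a C*-algebra, i.e. $p(\mathfrak{V})$ is dense in $A$) by a subset $\mathfrak{V}\subset A$ for which $\tau_g(\mathfrak{V})\subset p(\mathfrak{V})$ for every $g\in K$. Also assume that $\{\tau_g(a):g\in K\}$ is totally bounded in $A$ (in norm) for every $a\in\mathfrak{V}$. Then $\{\tau_g(a):g\in K\}$ is totally bounded in $A$ for every $a\in A$.
   Context: For $\mathfrak{V}\subset A$, $p(\mathfrak{V})$ denotes the set of all finite complex linear combinations of finite products of elements of $\mathfrak{V}\cup\mathfrak{V}^*$, where $\mathfrak{V}^*=\{a^*:a\in\mathfrak{V}\}$. A set $B$ is totally bounded if for every $\varepsilon>0$ there is a finite set $F$ such that every element of $B$ is within distance $\varepsilon$ of some element of $F$. *)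

(* Defs.v *)
From HB Require Import structures.
From mathcomp Require Import all_boot all_order all_algebra.
From mathcomp Require Import all_classical all_reals all_analysis.
From mathcomp Require Import complex.
Set Implicit Arguments. Unset Strict Implicit. Unset Printing Implicit Defensive.
Import Order.TTheory GRing.Theory Num.Theory.
Import numFieldNormedType.Exports.
Local Open Scope classical_set_scope.
Local Open Scope ring_scope.
Local Open Scope complex_scope.

Definition is_Cstar_algebra (R : realType) (A : completeNormedModType R[i])
    (mul : A -> A -> A) (star : A -> A) : Prop :=
  (forall a b c : A, mul a (mul b c) = mul (mul a b) c) /\
      (forall a b c : A, mul a (b + c) = mul a b + mul a c) /\
      (forall a b c : A, mul (a + b) c = mul a c + mul b c) /\
      (forall (k : R[i]) (a b : A), mul (k *: a) b = k *: mul a b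
                                  /\ mul a (k *: b) = k *: mul a b) /\
      (forall a : A, star (star a) = a) /\
      (forall a b : A, star (a + b) = star a + star b) /\
      (forall (k : R[i]) (a : A), star (k *: a) = (k^*)%C *: star a) /\
      (forall a b : A, star (mul a b) = mul (star b) (star a)) /\
      (forall a b : A, `|mul a b| <= `|a| * `|b|) /\
      (forall a : A, `|mul (star a) a| = `|a| ^+ 2).

Definition is_star_hom (R : realType) (A : completeNormedModType R[i])
    (mul : A -> A -> A) (star : A -> A) (t : A -> A) : Prop :=
  [/\ (forall a b : A, t (a + b) = t a + t b),
      (forall (k : R[i]) (a : A), t (k *: a) = k *: t a),
      (forall a b : A, t (mul a b) = mul (t a) (t b)) &
      (forall a : A, t (star a) = star (t a))].

(* Finite product x_1 x_2 ... x_n of a nonempty list (0 for the empty list,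
   which is never used below since words are required to be nonempty). *)
Definition word_prod (T : zmodType) (mul : T -> T -> T) (s : seq T) : T :=
  if s is x :: s' then foldl mul x s' else 0.

(* p(V): all finite complex linear combinations of finite (nonempty) products
   of elements of V ∪ V^*. *)
Definition pstar (R : realType) (A : completeNormedModType R[i])
    (mul : A -> A -> A) (star : A -> A) (V : set A) : set A :=
  [set x | exists (n : nat) (c : 'I_n -> R[i]) (w : 'I_n -> seq A),
      (forall i, w i != [::]) /\
      (forall i a, a \in w i -> V a \/ exists2 b, V b & a = star b) /\
      x = \sum_(i < n) c i *: word_prod mul (w i)].

Definition totally_bounded_set (R : realType) (A : completeNormedModType R[i])
    (B : set A) : Prop :=
  forall eps : R, 0 < eps ->
    exists F : seq A, forall b, B b -> exists2 f, f \in F & `|b - f| < eps%:C.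

(* Main.v *)
Require Import Defs.
From HB Require Import structures.
From mathcomp Require Import all_boot all_order all_algebra.
From mathcomp Require Import all_classical all_reals all_analysis.
From mathcomp Require Import complex.
From mathcomp Require Import ring lra.
Import Order.TTheory GRing.Theory Num.Theory.
Import numFieldNormedType.Exports.
Local Open Scope classical_set_scope.
Local Open Scope ring_scope.
Set Implicit Arguments. Unset Strict Implicit. Unset Printing Implicit Defensive.
Section Norms.
Variables (R : realType) (A : completeNormedModType R[i]).

Definition Nr (x : A) : R := complex.Re `|x|.
Definition Nc (k : R[i]) : R := complex.Re `|k|.

Lemma realE (z : R[i]) : 0 <= z -> z = (complex.Re z)%:C%C.
Proof.
move=> z0; rewrite [LHS]complexE.
have : complex.Im z = 0.
  by move: z0; rewrite lecE => /andP[/eqP -> _].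
by move=> ->; rewrite mulr0 addr0.
Qed.

Lemma NrE (x : A) : `|x| = (Nr x)%:C%C.
Proof. exact: realE. Qed.
Lemma NcE (k : R[i]) : `|k| = (Nc k)%:C%C.
Proof. exact: realE. Qed.

Lemma Nr_ge0 x : 0 <= Nr x.
Proof. have := normr_ge0 x. by rewrite NrE -(rmorph0 (real_complex R)) lecR. Qed.
Lemma Nc_ge0 k : 0 <= Nc k.
Proof. have := normr_ge0 k. by rewrite NcE -(rmorph0 (real_complex R)) lecR. Qed.

Lemma NrD x y : Nr (x + y) <= Nr x + Nr y.
Proof. by rewrite -lecR rmorphD /= -!NrE ler_normD. Qed.

Lemma NrN x : Nr (- x) = Nr x.
Proof. by rewrite /Nr normrN. Qed.

Lemma NrB x y : Nr (x - y) = Nr (y - x).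
Proof. by rewrite /Nr distrC. Qed.

Lemma NrZ k x : Nr (k *: x) = Nc k * Nr x.
Proof. by apply: (@complexI R); rewrite rmorphM /= -!NrE -NcE normrZ. Qed.

Lemma Nr0 : Nr 0 = 0.
Proof. by rewrite /Nr normr0. Qed.

Lemma Nr_eq0 x : Nr x = 0 -> x = 0.
Proof. by move=> h; apply/normr0_eq0; rewrite NrE h. Qed.

Lemma Nr_lt x e : (`|x| < e%:C%C) <-> Nr x < e.
Proof. by rewrite NrE ltcR. Qed.

Lemma NcR (r : R) : Nc r%:C%C = `|r|.
Proof.
apply: complexI; rewrite -NcE normc_def /= expr0n /= addr0.
by rewrite sqrtr_sqr.
Qed.

Lemma small_eq0 x : (forall r, 0 < r -> Nr x < r) -> x = 0.
Proof.
move=> H; apply: Nr_eq0; apply/eqP; rewrite eq_le Nr_ge0 andbT.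
rewrite leNgt; apply/negP => h; by move: (H _ h); rewrite ltxx.
Qed.

End Norms.
Section Cstar.
Variables (R : realType) (A : completeNormedModType R[i]).
Variables (mul : A -> A -> A) (star : A -> A).
Hypothesis HC : is_Cstar_algebra mul star.

Lemma mA a b c : mul a (mul b c) = mul (mul a b) c.
Proof. by case: HC. Qed.
Lemma mDr a b c : mul a (b + c) = mul a b + mul a c.
Proof. by case: HC => _ []. Qed.
Lemma mDl a b c : mul (a + b) c = mul a c + mul b c.
Proof. by case: HC => _ [_ []]. Qed.
Lemma mZl k a b : mul (k *: a) b = k *: mul a b.
Proof. by case: HC => _ [_ [_ [H _]]]; case: (H k a b). Qed.
Lemma mZr k a b : mul a (k *: b) = k *: mul a b.
Proof. by case: HC => _ [_ [_ [H _]]]; case: (H k a b). Qed.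
Lemma sK a : star (star a) = a.
Proof. by case: HC => _ [_ [_ [_ [H _]]]]. Qed.
Lemma sD a b : star (a + b) = star a + star b.
Proof. by case: HC => _ [_ [_ [_ [_ [H _]]]]]. Qed.
Lemma sZ k a : star (k *: a) = (k^*)%C *: star a.
Proof. by case: HC => _ [_ [_ [_ [_ [_ [H _]]]]]]. Qed.
Lemma sM a b : star (mul a b) = mul (star b) (star a).
Proof. by case: HC => _ [_ [_ [_ [_ [_ [_ [H _]]]]]]]. Qed.
Lemma nM a b : `|mul a b| <= `|a| * `|b|.
Proof. by case: HC => _ [_ [_ [_ [_ [_ [_ [_ [H _]]]]]]]]. Qed.
Lemma nC a : `|mul (star a) a| = `|a| ^+ 2.
Proof. by case: HC => _ [_ [_ [_ [_ [_ [_ [_ [_ H]]]]]]]]. Qed.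

Lemma m0l a : mul 0 a = 0.
Proof. by apply/(addrI (mul 0 a)); rewrite -mDl !addr0. Qed.
Lemma m0r a : mul a 0 = 0.
Proof. by apply/(addrI (mul a 0)); rewrite -mDr !addr0. Qed.
Lemma mNl a b : mul (- a) b = - mul a b.
Proof. by apply/(addrI (mul a b)); rewrite -mDl !subrr m0l. Qed.
Lemma mNr a b : mul a (- b) = - mul a b.
Proof. by apply/(addrI (mul a b)); rewrite -mDr !subrr m0r. Qed.
Lemma mBl a b c : mul (a - b) c = mul a c - mul b c.
Proof. by rewrite mDl mNl. Qed.
Lemma mBr a b c : mul a (b - c) = mul a b - mul a c.
Proof. by rewrite mDr mNr. Qed.
Lemma s0 : star 0 = 0.
Proof. by apply/(addrI (star 0)); rewrite -sD !addr0. Qed.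
Lemma sN a : star (- a) = - star a.
Proof. by apply/(addrI (star a)); rewrite -sD !subrr s0. Qed.
Lemma sB a b : star (a - b) = star a - star b.
Proof. by rewrite sD sN. Qed.

Lemma NrM a b : Nr (mul a b) <= Nr a * Nr b.
Proof. by rewrite -lecR rmorphM /= -!NrE nM. Qed.
Lemma NrC a : Nr (mul (star a) a) = Nr a ^+ 2.
Proof. by apply: (@complexI R); rewrite rmorphXn /= -!NrE nC. Qed.
Lemma Nr_star a : Nr (star a) = Nr a.
Proof.
have H : forall b, Nr b <= Nr (star b).
  move=> b; have := NrM (star b) b; rewrite NrC => h.
  have := Nr_ge0 b; have := Nr_ge0 (star b); nra.
by apply/eqP; rewrite eq_le H -{2}(sK a) H.
Qed.
Lemma Nr_sa a : star a = a -> Nr (mul a a) = Nr a ^+ 2.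
Proof. by move=> h; rewrite -{1}h NrC. Qed.
End Cstar.
Section Bound.
Variables (R : realType) (A : completeNormedModType R[i]).
Variables (mul : A -> A -> A) (star : A -> A).
Hypothesis HC : is_Cstar_algebra mul star.

Lemma conj_i : (('i%C : R[i])^*)%C = - 'i%C.
Proof. by apply/eqP; rewrite eq_complex /= oppr0 !eqxx. Qed.

Lemma two_scale (y : A) : y + y = ((1 + 1 : R)%:C)%C *: y.
Proof. by rewrite rmorphD rmorph1 scalerDl scale1r. Qed.

Lemma Nr_two (y : A) : Nr (y + y) = 2 * Nr y.
Proof.
rewrite two_scale NrZ NcR ger0_norm; last by lra.
by congr (_ * _).
Qed.

Lemma bound3 y c : star y = y -> star c = c -> mul y c = mul c y ->
  mul c c + (c + c) + mul y y = 0 -> Nr y <= 3.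
Proof.
move=> Hy Hc Hyc H.
have E : mul y y = -(mul c c + (c + c)).
  by apply/eqP; rewrite -addr_eq0 addrC H.
pose w := y + 'i%C *: c.
have sw : star w = y + (- 'i%C) *: c by rewrite /w (sD HC) (sZ HC) Hy Hc conj_i.
have e1 : mul (star w) w = - (c + c).
  rewrite sw /w (mDl HC) !(mDr HC) !(mZl HC) !(mZr HC) Hyc scalerA.
  have -> : - 'i%C * 'i%C = 1 :> R[i] by rewrite mulNr -expr2 sqr_i opprK.
  rewrite scale1r scaleNr addrA addrK E opprD addrAC addNr add0r //.
have e2 : y + y = w + star w.
  by rewrite sw /w addrACA -scalerDl subrr scale0r addr0.
have h1 : Nr w ^+ 2 <= 2 * Nr c.
  by rewrite -(NrC HC) e1 NrN Nr_two.
have h2 : 2 * Nr y <= 2 * Nr w.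
  by rewrite -Nr_two e2 (le_trans (NrD _ _)) // (Nr_star HC) -mulr2n mulr_natl.
have h3 : Nr c ^+ 2 <= 2 * Nr c + Nr y ^+ 2.
  rewrite -(Nr_sa HC Hc) -(Nr_sa HC Hy).
  have -> : mul c c = - (c + c) - mul y y.
    by rewrite E opprK addrCA addNr addr0.
  by rewrite (le_trans (NrD _ _)) // !NrN Nr_two.
have a0 := Nr_ge0 y; have b0 := Nr_ge0 c; have m0 := Nr_ge0 w.
have hay : Nr y <= Nr w by lra.
have hb : Nr c <= 4 by nra.
nra.
Qed.
End Bound.
Local Open Scope classical_set_scope.
Lemma geo_small (R : realType) (r : R) : 0 < r -> exists n, 2 * (2^-1)^+n < r.
Proof.
move=> r0.
have h : `|2^-1 : R| < 1 by rewrite ger0_norm; lra.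
have r20 : 0 < r / 2 by lra.
have [i _ Hi] := cvg_expr h (nbhsx_ballx (0:R) _ r20).
exists i; have := Hi i (leqnn i); rewrite /= -ball_normE /= sub0r normrN.
rewrite ger0_norm; last by apply: exprn_ge0; lra.
lra.
Qed.
Section Fix.
Variables (R : realType) (A : completeNormedModType R[i]).
Variables (mul : A -> A -> A) (star : A -> A).
Hypothesis HC : is_Cstar_algebra mul star.
Variable h : A.
Hypothesis Hh : star h = h.
Hypothesis Nh : Nr h <= 2^-1.

Let s : R[i] := ((- 2^-1 : R)%:C)%C.
Let F (x : A) := s *: (mul h h + mul x x).

Lemma Nc_s : Nc s = 2^-1.
Proof. by rewrite /s NcR normrN ger0_norm // invr_ge0; lra. Qed.

Lemma F_star x : star x = x -> star (F x) = F x.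
Proof.
move=> Hx; rewrite /F (sZ HC) conjc_real (sD HC) !(sM HC) Hx Hh //.
Qed.

Lemma F_comm x : mul x h = mul h x -> mul (F x) h = mul h (F x).
Proof.
move=> Hx; rewrite /F (mZl HC) (mZr HC) (mDl HC) (mDr HC); congr (_ *: (_ + _)).
  by rewrite (mA HC).
by rewrite -(mA HC) Hx (mA HC) Hx -(mA HC).
Qed.

Lemma Nhh : Nr (mul h h) <= 4^-1.
Proof.
apply: (le_trans (NrM HC _ _)); have H0 := Nr_ge0 h.
have := ler_pM H0 H0 Nh Nh; have -> : (4^-1 : R) = 2^-1 * 2^-1 by field. done.
Qed.

Lemma F_norm x : Nr x <= 4^-1 -> Nr (F x) <= 4^-1.
Proof.
move=> Hx; rewrite /F NrZ Nc_s.
have := NrD (mul h h) (mul x x); have := NrM HC x x; have := Nhh.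
have := Nr_ge0 x; have := Nr_ge0 (mul h h + mul x x); nra.
Qed.

Lemma F_lipg x y :
  Nr (F x - F y) <= 2^-1 * ((Nr x + Nr y) * Nr (x - y)).
Proof.
rewrite /F -scalerBr NrZ Nc_s.
have -> : mul h h + mul x x - (mul h h + mul y y) = mul x (x - y) + mul (x - y) y.
  rewrite (mBr HC) (mBl HC) addrA subrK opprD addrACA subrr add0r //.
have := NrD (mul x (x - y)) (mul (x - y) y).
have := NrM HC x (x - y); have := NrM HC (x - y) y.
have := Nr_ge0 x; have := Nr_ge0 y; have := Nr_ge0 (x - y).
have := Nr_ge0 (mul x (x - y) + mul (x - y) y).
nra.
Qed.

Lemma F_lip x y : Nr x <= 4^-1 -> Nr y <= 4^-1 ->
  Nr (F x - F y) <= 4^-1 * Nr (x - y).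
Proof.
move=> Hx Hy; apply: (le_trans (F_lipg x y)).
have := Nr_ge0 (x - y); have := Nr_ge0 x; have := Nr_ge0 y; nra.
Qed.

Let u n := iter n F 0.

Lemma u_inv n : [/\ star (u n) = u n, mul (u n) h = mul h (u n) & Nr (u n) <= 4^-1].
Proof.
elim: n => [|n [IH1 IH2 IH3]].
  rewrite /u /= (s0 HC) (m0l HC) (m0r HC) Nr0; split => //; lra.
rewrite /u iterS -/(u n); split.
- exact: F_star.
- exact: F_comm.
- exact: F_norm.
Qed.

Lemma u_step n : Nr (u n.+1 - u n) <= (2^-1) ^+ n.
Proof.
elim: n => [|n IH].
  rewrite expr0 /u /= subr0; have [_ _ H] := u_inv 1; move: H; rewrite /u /=; lra.
rewrite {1 2}/u !iterS -/(u n) -/(u n.+1) -iterS -/(u n.+1).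
have [_ _ H1] := u_inv n; have [_ _ H2] := u_inv n.+1.
apply: (le_trans (F_lip H2 H1)); rewrite exprS.
have := Nr_ge0 (u n.+1 - u n); have : 0 <= (2^-1 : R) ^+ n by apply: exprn_ge0; lra.
nra.
Qed.

Lemma u_cauchy n m : Nr (u (n + m) - u n) <= 2 * (2^-1) ^+ n - 2 * (2^-1) ^+ (n + m).
Proof.
elim: m => [|m IH]; first by rewrite addn0 subrr Nr0 subrr.
have -> : u (n + m.+1) - u n = (u (n + m).+1 - u (n + m)) + (u (n + m) - u n).
  by rewrite addnS addrA subrK.
apply: (le_trans (NrD _ _)); have := u_step (n + m).
rewrite addnS exprS; lra.
Qed.

Lemma u_cauchy' n m : (n <= m)%N -> Nr (u m - u n) <= 2 * (2^-1) ^+ n.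
Proof.
move=> nm; rewrite -(subnKC nm); apply: (le_trans (u_cauchy _ _)).
have : 0 <= (2^-1 : R) ^+ (n + (m - n)) by apply: exprn_ge0; lra.
lra.
Qed.

Lemma u_cvg : cvg (u @ \oo).
Proof.
apply: cauchy_cvg; apply: cauchy_exP => e e0.
have e1 := realE (ltW e0).
have r0 : 0 < complex.Re e by move: e0; rewrite e1 ltcR.
have [n Hn] := geo_small r0.
exists (u n); exists n => // m /= nm.
rewrite -ball_normE /= e1 Nr_lt NrB.
by apply: (le_lt_trans (u_cauchy' nm)).
Qed.

Lemma fixpt : exists b, [/\ star b = b, mul b h = mul h b &
   mul b b + (b + b) + mul h h = 0].
Proof.
pose l := lim (u @ \oo).
have Hl : u @ \oo --> l := u_cvg.
have near_l : forall r, 0 < r -> exists n0, forall n, (n0 <= n)%N -> Nr (l - u n) < r.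
  move=> r r0; have := (@cvgrPdist_lt _ _ _ _ _ u l).1 Hl (r%:C)%C; rewrite ltcR => /(_ _ r0).
  by case=> n0 _ H; exists n0 => n /H /= /Nr_lt.
exists l; split.
- apply/eqP; rewrite -subr_eq0; apply/eqP; apply: (small_eq0) => r r0.
  have r2 : 0 < r / 2 by lra.
  have [n0 H] := near_l _ r2; have := H n0 (leqnn _).
  have [S _ _] := u_inv n0.
  have -> : star l - l = star (l - u n0) - (l - u n0).
    by rewrite (sB HC) S opprB addrA subrK.
  have := NrD (star (l - u n0)) (- (l - u n0)); rewrite NrN (Nr_star HC); lra.
- apply/eqP; rewrite -subr_eq0; apply/eqP; apply: (small_eq0) => r r0.
  have K0 : 0 < 2 * Nr h + 1 by have := Nr_ge0 h; lra.
  have r2 : 0 < r / (2 * Nr h + 1) by apply: divr_gt0.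
  have [n0 H] := near_l _ r2; have := H n0 (leqnn _).
  have [_ S _] := u_inv n0.
  have -> : mul l h - mul h l = mul (l - u n0) h - mul h (l - u n0).
    by rewrite (mBl HC) (mBr HC) S opprB addrA subrK.
  move=> Hn.
  have := NrD (mul (l - u n0) h) (- mul h (l - u n0)); rewrite NrN.
  have := NrM HC (l - u n0) h; have := NrM HC h (l - u n0).
  have := Nr_ge0 h; have := Nr_ge0 (l - u n0).
  have E : r / (2 * Nr h + 1) * (2 * Nr h + 1) = r by rewrite mulfVK // gt_eqF.
  nra.
- have Fl : l = F l.
    apply/eqP; rewrite -subr_eq0; apply/eqP; apply: (small_eq0) => r r0.
    have K0 : 0 < Nr l + 2 by have := Nr_ge0 l; lra.
    have r2 : 0 < r / (Nr l + 2) by apply: divr_gt0.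
    have [n0 H] := near_l _ r2; have H1 := H n0 (leqnn _).
    have H2 := H n0.+1 (leqnSn _).
    have [_ _ U] := u_inv n0.
    have -> : l - F l = (l - u n0.+1) + (F (u n0) - F l).
      by rewrite /u iterS -/(u n0) addrA subrK.
    apply: (le_lt_trans (NrD _ _)).
    have L1 := F_lipg (u n0) l; rewrite [Nr (u n0 - l)]NrB in L1.
    set d := r / (Nr l + 2) in r2 H1 H2.
    have E : d * (Nr l + 2) = r by rewrite /d mulfVK // gt_eqF.
    have Lg := Nr_ge0 l; have xg := Nr_ge0 (u n0).
    have T : (Nr (u n0) + Nr l) * Nr (l - u n0) <= (Nr (u n0) + Nr l) * d.
      by apply: ler_wpM2l; [lra | exact: ltW].
    have T2 : (Nr (u n0) + Nr l) * d <= (4^-1 + Nr l) * d.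
      by apply: ler_wpM2r; [exact: ltW | lra].
    have T3 : (4^-1 + Nr l) * d <= 2 * d + Nr l * d - d by nra.
    nra.
  have E2 : l + l = - (mul h h + mul l l).
    rewrite two_scale {1}Fl /F scalerA -rmorphM /=.
    have -> : (1 + 1) * (- 2^-1) = -1 :> R by field.
    by rewrite rmorphN rmorph1 scaleN1r.
  by rewrite E2 opprD addrCA subrr addr0 addNr.
Qed.
End Fix.
Section Hom.
Variables (R : realType) (A : completeNormedModType R[i]).
Variables (mul : A -> A -> A) (star : A -> A).
Hypothesis HC : is_Cstar_algebra mul star.
Variable t : A -> A.
Hypothesis Ht : is_star_hom mul star t.

Lemma tD a b : t (a + b) = t a + t b. Proof. by case: Ht. Qed.
Lemma tZ k a : t (k *: a) = k *: t a. Proof. by case: Ht. Qed.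
Lemma tM a b : t (mul a b) = mul (t a) (t b). Proof. by case: Ht. Qed.
Lemma tS a : t (star a) = star (t a). Proof. by case: Ht. Qed.
Lemma t0 : t 0 = 0.
Proof. by rewrite -(scale0r (0 : A)) tZ !scale0r. Qed.
Lemma tN a : t (- a) = - t a.
Proof. by rewrite -scaleN1r tZ scaleN1r. Qed.
Lemma tB a b : t (a - b) = t a - t b.
Proof. by rewrite tD tN. Qed.

Lemma t_small h : star h = h -> Nr h <= 2^-1 -> Nr (t h) <= 3.
Proof.
move=> Hh Nh; have [b [Sb Cb Eb]] := fixpt HC Hh Nh.
apply: (bound3 HC (c := t b)).
- by rewrite -tS Hh.
- by rewrite -tS Sb.
- by rewrite -!tM Cb.
- by rewrite -!tM -!tD Eb t0.
Qed.

Lemma t_sa h : star h = h -> Nr (t h) <= 6 * Nr h.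
Proof.
move=> Hh.
have [z|nz] := eqVneq (Nr h) 0.
  by rewrite (Nr_eq0 z) t0 Nr0 mulr0.
have p : 0 < Nr h by rewrite lt0r nz Nr_ge0.
pose k : R := (2 * Nr h)^-1.
have k0 : 0 < k by rewrite /k invr_gt0; lra.
have Hh' : star ((k%:C)%C *: h) = (k%:C)%C *: h by rewrite (sZ HC) conjc_real Hh.
have Nh' : Nr ((k%:C)%C *: h) <= 2^-1.
  by rewrite NrZ NcR (ger0_norm (ltW k0)) /k invfM -mulrA mulVf ?mulr1.
have T := @t_small ((k%:C)%C *: h) Hh' Nh'.
rewrite tZ NrZ NcR (ger0_norm (ltW k0)) in T.
have E : k * (2 * Nr h) = 1 by rewrite /k mulVf // mulf_neq0 // pnatr_eq0.
have G := Nr_ge0 (t h).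
have : Nr (t h) = (k * Nr (t h)) * (2 * Nr h).
  by rewrite mulrAC E mul1r.
move=> ->; have -> : 6 * Nr h = 3 * (2 * Nr h) by rewrite mulrA; congr (_ * _); lra.
apply: ler_wpM2r => //; lra.
Qed.

Lemma t_lip a : Nr (t a) <= 3 * Nr a.
Proof.
have S : star (mul (star a) a) = mul (star a) a by rewrite (sM HC) (sK HC).
have := t_sa S; rewrite tM tS (NrC HC) (NrC HC) => H.
have := Nr_ge0 a; have := Nr_ge0 (t a); nra.
Qed.
End Hom.
Section TB.
Variables (R : realType) (A : completeNormedModType R[i]).
Variables (mul : A -> A -> A) (star : A -> A).
Hypothesis HC : is_Cstar_algebra mul star.
Variable K : Type.

Definition TBf (f : K -> A) := forall e : R, 0 < e ->
  exists F : seq A, forall g, exists2 x, x \in F & Nr (f g - x) < e.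

Lemma TB_to f : TBf f -> totally_bounded_set [set f g | g in [set: K]].
Proof.
move=> H e e0; have [F HF] := H e e0; exists F => b [g _ <-].
by have [x xF Hx] := HF g; exists x => //; apply/Nr_lt.
Qed.

Lemma TB_from f : totally_bounded_set [set f g | g in [set: K]] -> TBf f.
Proof.
move=> H e e0; have [F HF] := H e e0; exists F => g.
by have [x xF Hx] := HF (f g) (ex_intro2 _ _ g I erefl); exists x => //; apply/Nr_lt.
Qed.

Lemma TB_const c : TBf (fun _ => c).
Proof. by move=> e e0; exists [:: c] => g; exists c; rewrite ?mem_head // subrr Nr0. Qed.

Lemma TB_add f h : TBf f -> TBf h -> TBf (fun g => f g + h g).
Proof.
move=> Hf Hh e e0; have e2 : 0 < e / 2 by lra.
have [F1 H1] := Hf _ e2; have [F2 H2] := Hh _ e2.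
exists [seq x + y | x <- F1, y <- F2] => g.
have [x xF Hx] := H1 g; have [y yF Hy] := H2 g.
exists (x + y); first exact: allpairs_f.
have -> : f g + h g - (x + y) = (f g - x) + (h g - y) by rewrite opprD addrACA.
apply: (le_lt_trans (NrD _ _)); lra.
Qed.

Lemma TB_scale k f : TBf f -> TBf (fun g => k *: f g).
Proof.
move=> Hf e e0; have c0 := Nc_ge0 k.
have D0 : 0 < Nc k + 1 by lra.
have d0 : 0 < e / (Nc k + 1) by apply: divr_gt0.
have [F HF] := Hf _ d0; exists (map (fun x => k *: x) F) => g.
have [x xF Hx] := HF g; exists (k *: x); first exact: map_f.
rewrite -scalerBr NrZ.
have E : e / (Nc k + 1) * (Nc k + 1) = e by rewrite mulfVK // gt_eqF.
have := Nr_ge0 (f g - x); nra.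
Qed.

Lemma TB_star f : TBf f -> TBf (fun g => star (f g)).
Proof.
move=> Hf e e0; have [F HF] := Hf _ e0; exists (map star F) => g.
have [x xF Hx] := HF g; exists (star x); first exact: map_f.
by rewrite -(sB HC) (Nr_star HC).
Qed.

Lemma le_sum_mem (F : seq A) x : x \in F -> Nr x <= \sum_(y <- F) Nr y.
Proof.
elim: F => [//|z F IH]; rewrite in_cons big_cons => /orP[/eqP ->|/IH H].
  by rewrite lerDl sumr_ge0 // => i _; exact: Nr_ge0.
by apply: (le_trans H); rewrite lerDr Nr_ge0.
Qed.

Lemma TB_bounded f : TBf f -> exists M, 0 <= M /\ forall g, Nr (f g) <= M.
Proof.
move=> Hf; have [F HF] := Hf 1 ltr01.
exists (\sum_(y <- F) Nr y + 1); split.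
  by rewrite addr_ge0 // sumr_ge0 // => i _; exact: Nr_ge0.
move=> g; have [x xF Hx] := HF g.
have -> : f g = x + (f g - x) by rewrite addrC subrK.
apply: (le_trans (NrD _ _)); apply: lerD; first exact: le_sum_mem.
exact: ltW.
Qed.

Lemma TB_mul f h : TBf f -> TBf h -> TBf (fun g => mul (f g) (h g)).
Proof.
move=> Hf Hh e e0.
have [M1 [M10 HM1]] := TB_bounded Hf; have [M2 [M20 HM2]] := TB_bounded Hh.
pose D := M1 + M2 + e + 2.
have D0 : 0 < D by rewrite /D; lra.
have d0 : 0 < e / D by apply: divr_gt0.
have E : e / D * D = e by rewrite mulfVK // gt_eqF.
set d := e / D in d0 E.
have d1 : d <= 1.
  have : d * D <= 1 * D by rewrite E mul1r /D; lra.
  by rewrite ler_pM2r.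
have [F1 H1] := Hf _ d0; have [F2 H2] := Hh _ d0.
exists [seq mul x y | x <- F1, y <- F2] => g.
have [x xF Hx] := H1 g; have [y yF Hy] := H2 g.
exists (mul x y); first exact: (allpairs_f mul).
have -> : mul (f g) (h g) - mul x y = mul (f g) (h g - y) + mul (f g - x) y.
  by rewrite (mBr HC) (mBl HC) addrA subrK.
apply: (le_lt_trans (NrD _ _)).
have Ny : Nr y <= M2 + 1.
  have -> : y = h g - (h g - y) by rewrite opprB addrC subrK.
  apply: (le_trans (NrD _ _)); rewrite NrN; apply: lerD => //; lra.
have T1 : Nr (mul (f g) (h g - y)) <= M1 * d.
  apply: (le_trans (NrM HC _ _)); apply: ler_pM => //; try exact: Nr_ge0.
  exact: ltW.
have T2 : Nr (mul (f g - x) y) <= d * (M2 + 1).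
  apply: (le_trans (NrM HC _ _)); apply: ler_pM => //; try exact: Nr_ge0.
  exact: ltW.
have T3 : M1 * d + d * (M2 + 1) < d * D.
  rewrite /D; nra.
lra.
Qed.

Lemma TB_approx f : (forall e, 0 < e -> exists h, TBf h /\ forall g, Nr (f g - h g) <= e) ->
  TBf f.
Proof.
move=> H e e0; have e2 : 0 < e / 2 by lra.
have [h [Hh Hfh]] := H _ e2; have [F HF] := Hh _ e2.
exists F => g; have [x xF Hx] := HF g; exists x => //.
have -> : f g - x = (f g - h g) + (h g - x) by rewrite addrA subrK.
apply: (le_lt_trans (NrD _ _)); have := Hfh g; lra.
Qed.

Variable tau : K -> A -> A.
Hypothesis Htau : forall g, is_star_hom mul star (tau g).

Lemma t_word g s x : tau g (foldl mul x s) = foldl mul (tau g x) (map (tau g) s).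
Proof.
elim: s x => [//|y s IH] x /=; by rewrite IH (tM (Htau g)).
Qed.

Lemma t_wp g s : tau g (word_prod mul s) = word_prod mul (map (tau g) s).
Proof. case: s => [|x s] /=; [exact: (t0 (Htau g)) | exact: t_word]. Qed.

Lemma t_sum g n (F : 'I_n -> A) : tau g (\sum_(i < n) F i) = \sum_(i < n) tau g (F i).
Proof.
elim: n F => [|n IH] F; first by rewrite !big_ord0 (t0 (Htau g)).
by rewrite !big_ord_recr /= (tD (Htau g)) IH.
Qed.

Lemma TB_foldl s : forall f : K -> A, TBf f -> (forall y, y \in s -> TBf (fun g => tau g y)) ->
  TBf (fun g => foldl mul (f g) (map (tau g) s)).
Proof.
elim: s => [|y s IH] f Hf Hs //=.
apply: (IH (fun g => mul (f g) (tau g y))).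
  by apply: TB_mul => //; apply: Hs; rewrite mem_head.
by move=> z zs; apply: Hs; rewrite in_cons zs orbT.
Qed.

Lemma TB_bigsum n (F : 'I_n -> K -> A) : (forall i, TBf (F i)) ->
  TBf (fun g => \sum_(i < n) F i g).
Proof.
elim: n F => [|n IH] F HF.
  by move=> e e0; exists [:: 0] => g; exists 0; rewrite ?mem_head // big_ord0 subrr Nr0.
have := TB_add (IH (fun i => F (widen_ord (leqnSn n) i)) (fun i => HF _)) (HF ord_max).
by move=> H e e0; have [G HG] := H e e0; exists G => g; rewrite big_ord_recr; exact: HG.
Qed.

End TB.
Theorem proposition5p3 (R : realType) (A : completeNormedModType R[i])
    (mul : A -> A -> A) (star : A -> A)
    (K : Type) (tau : K -> A -> A) (V : set A) :
  is_Cstar_algebra mul star ->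
  (forall g : K, is_star_hom mul star (tau g)) ->
  closure (pstar mul star V) = setT ->
  (forall g : K, tau g @` V `<=` pstar mul star V) ->
  (forall a : A, V a -> totally_bounded_set [set tau g a | g in [set: K]]) ->
  forall a : A, totally_bounded_set [set tau g a | g in [set: K]].
Proof.
move=> HC Htau Hcl _ HV a.
have TBV : forall y, V y -> TBf (fun g => tau g y).
  by move=> y Vy; apply: TB_from; exact: HV.
apply: TB_to; apply: TB_approx => e e0.
have r0 : 0 < e / 3 by lra.
have : closure (pstar mul star V) a by rewrite Hcl.
move=> /(_ (ball a ((e / 3)%:C)%C)) [].
  by apply: nbhsx_ballx; rewrite ltcR.
move=> v [[n [c [w [Hne [Hw ->]]]]]] Hb.
exists (fun g => tau g (\sum_(i < n) c i *: word_prod mul (w i))); split.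
  have -> : (fun g => tau g (\sum_(i < n) c i *: word_prod mul (w i))) =
            (fun g => \sum_(i < n) c i *: word_prod mul (map (tau g) (w i))).
    apply: funext => g; rewrite (t_sum Htau); apply: eq_bigr => i _.
    by rewrite (tZ (Htau g)) (t_wp Htau).
  apply: (TB_bigsum (F := fun i g => c i *: word_prod mul (map (tau g) (w i)))) => i.
  apply: TB_scale.
  have Hy : forall y, y \in w i -> TBf (fun g => tau g y).
    move=> y /(Hw i) [Vy|[b Vb ->]]. exact: (TBV y Vy).
    have -> : (fun g => tau g (star b)) = (fun g => star (tau g b)).
      by apply: funext => g; rewrite (tS (Htau g)).
    by apply: (TB_star HC); exact: TBV.
  move: (Hne i) Hy; case: (w i) => [//|x s] _ Hy /=.
  apply: (TB_foldl HC (tau := tau) (s := s) (f := fun g => tau g x)); first by apply: Hy; rewrite mem_head.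
  by move=> y ys; apply: Hy; rewrite in_cons ys orbT.
move=> g; rewrite -(tB (Htau g)).
apply: (le_trans (t_lip HC (Htau g) _)).
move: Hb; rewrite -ball_normE /= Nr_lt => Hb; lra.
Qed.
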